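(* For every integer $g\geq 3$ there exist a graph $G$ with girth $g$ and an $N\in\mathbb{N}$ such that $P_{DP}(G,m)<P(G,m)$ for every integer $m\geq N$.
   Context: All graphs are finite and simple. $P(G,m)$ denotes the chromatic polynomial of $G$. A cover of a graph $G$ is a pair $\mathcal{H}=(L,H)$ where $H$ is a graph and $L:V(G)\to\mathcal{P}(V(H))$ satisfies: (1) the sets $L(u)$, $u\in V(G)$, partition $V(H)$; (2) for every $u$, $H[L(u)]$ is complete; (3) if $E_H(L(u),L(v))\neq\emptyset$ then $u=v$ or $uv\in E(G)$; (4) if $uv\in E(G)$ then $E_H(L(u),L(v))$ is a matching (possibly empty). Here $E_H(S,U)$ is the set of edges of $H$ between $S$ and $U$. The cover is $m$-fold if $|L(u)|=m$ for all $u$. An $\mathcal{H}$-coloring is an independent set of $H$ of size $|V(G)|$. $P_{DP}(G,\mathcal{H})$ is the number of $\mathcal{H}$-colorings, and $P_{DP}(G,m)$ is the minimum of $P_{DP}(G,\mathcal{H})$ over all $m$-fold covers $\mathcal{H}$ of $G$. *)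

(* Defs.v *)
From mathcomp Require Import all_boot.
Set Implicit Arguments. Unset Strict Implicit. Unset Printing Implicit Defensive.

Section Graphs.
Variable V : finType.

Definition simple_graph (e : rel V) : Prop :=
  (forall u v, e u v = e v u) /\ (forall u, ~~ e u u).

Definition has_cycle (e : rel V) (k : nat) : Prop :=
  3 <= k /\ exists c : 'I_k -> V, injective c /\ forall i : 'I_k, e (c i) (c (ordS i)).

Definition girth_eq (e : rel V) (g : nat) : Prop :=
  has_cycle e g /\ forall k, k < g -> ~ has_cycle e k.

Definition chrom (e : rel V) (m : nat) : nat :=
  #|[set f : {ffun V -> 'I_m} | [forall u, forall v, e u v ==> (f u != f v)]]|.

(* m-fold covers.  WLOG V(H) = V * 'I_m with L(u) = {u} * 'I_m;
   H is encoded by its adjacency (a boolean function on pairs). *)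
Definition cover_rel (m : nat) := {ffun (V * 'I_m) * (V * 'I_m) -> bool}.

Definition is_cover (e : rel V) (m : nat) (H : cover_rel m) : bool :=
  [&&
      [forall x, forall y, H (x, y) == H (y, x)],
      [forall x, ~~ H (x, x)],
      [forall x, forall y, ((x.1 == y.1) && (x != y)) ==> H (x, y)],
      [forall x, forall y, (H (x, y) && (x.1 != y.1)) ==> e x.1 y.1] &
      (* (4) for uv in E(G), E_H(L(u),L(v)) is a matching *)
      [forall x, forall y, forall z,
         [&& e x.1 y.1, y.1 == z.1, H (x, y) & H (x, z)] ==> (y == z)]].

(* Number of H-colourings: independent sets of H of size |V(G)|. *)
Definition dp_count (m : nat) (H : cover_rel m) : nat :=
  #|[set I : {set V * 'I_m} |
       (#|I| == #|V|) && [forall x in I, forall y in I, ~~ H (x, y)]]|.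

Definition dp_trivial (m : nat) : cover_rel m :=
  [ffun p => (p.1.1 == p.2.1) && (p.1 != p.2)].

Lemma dp_trivial_cover (e : rel V) (m : nat) :
  simple_graph e -> is_cover e (dp_trivial m).
Proof.
move=> [esym eirr].
apply/and5P; split.
- apply/forallP=> x; apply/forallP=> y; by rewrite !ffunE /= [y.1 == _]eq_sym [y == _]eq_sym.
- apply/forallP=> x; rewrite ffunE /=; apply/negP=> /andP [_ /negP]; apply; exact/eqP.
- by apply/forallP=> x; apply/forallP=> y; apply/implyP; rewrite ffunE.
- apply/forallP=> x; apply/forallP=> y; apply/implyP; rewrite ffunE /=.
  by case/andP=> /andP [/eqP hx _]; rewrite hx eq_refl.
- apply/forallP=> x; apply/forallP=> y; apply/forallP=> z; apply/implyP.
  case/and4P=> exy _ hxy _; move: hxy; rewrite ffunE /= => /andP [/eqP hx _].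
  by move: exy; rewrite hx (negbTE (eirr _)).
Qed.

Lemma dp_exists (e : rel V) (m : nat) (He : simple_graph e) :
  exists n, [exists H : cover_rel m, is_cover e H && (dp_count H == n)].
Proof.
exists (dp_count (dp_trivial m)); apply/existsP; exists (dp_trivial m).
by rewrite dp_trivial_cover // eqxx.
Qed.

Definition dp_chrom (e : rel V) (m : nat) (He : simple_graph e) : nat :=
  ex_minn (@dp_exists e m He).

End Graphs.

(* Main.v *)
Require Import Defs.
From mathcomp Require Import all_boot.
From mathcomp Require Import zify.
Set Implicit Arguments. Unset Strict Implicit. Unset Printing Implicit Defensive.

Lemma card_set_sum (T : finType) (P : pred T) :
  #|[set x | P x]| = \sum_(x : T) (P x : nat).
Proof.
rewrite -sum1_card big_mkcond /=; apply: eq_bigr => x _; rewrite inE; by case: (P x).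
Qed.

Lemma sum_ffun_tuple (n : nat) (T : finType) (F : {ffun 'I_n -> T} -> nat) :
  \sum_(f : {ffun 'I_n -> T}) F f = \sum_(t : n.-tuple T) F [ffun i => tnth t i].
Proof.
rewrite (reindex (fun t : n.-tuple T => [ffun i => tnth t i])) //.
exists (fun f : {ffun 'I_n -> T} => [tuple f i | i < n]) => t _.
  by apply: eq_from_tnth => i; rewrite tnth_mktuple ffunE.
by apply/ffunP => i; rewrite !ffunE tnth_mktuple.
Qed.

Lemma sum_tuple_cons (n : nat) (T : finType) (F : n.+1.-tuple T -> nat) :
  \sum_(t : n.+1.-tuple T) F t = \sum_(x : T) \sum_(s : n.-tuple T) F [tuple of x :: s].
Proof.
rewrite pair_big /=.
rewrite (reindex (fun p : T * n.-tuple T => [tuple of p.1 :: p.2])) //.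
exists (fun t : n.+1.-tuple T => (thead t, [tuple of behead t])) => [[x s] _|t _].
  by rewrite theadE; congr pair; apply: val_inj.
by rewrite /= -tuple_eta.
Qed.

Lemma sum_tuple_cat (a b : nat) (T : finType) (F : (a + b).-tuple T -> nat) :
  \sum_(t : (a + b).-tuple T) F t =
  \sum_(u : a.-tuple T) \sum_(v : b.-tuple T) F [tuple of u ++ v].
Proof.
rewrite pair_big /=.
rewrite (reindex (fun p : a.-tuple T * b.-tuple T => [tuple of p.1 ++ p.2])) //.
have ha (t : (a + b).-tuple T) : size (take a t) == a.
  by rewrite size_takel // size_tuple leq_addr.
have hb (t : (a + b).-tuple T) : size (drop a t) == b.
  by rewrite size_drop size_tuple; apply/eqP; lia.
exists (fun t => (Tuple (ha t), Tuple (hb t))) => [[u v] _|t _].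
  congr pair; apply: val_inj => /=.
    by rewrite take_size_cat // size_tuple.
  by rewrite drop_size_cat // size_tuple.
by apply: val_inj => /=; rewrite cat_take_drop.
Qed.

Lemma sum_tuple0 (T : finType) (F : 0.-tuple T -> nat) :
  \sum_(t : 0.-tuple T) F t = F [tuple].
Proof.
rewrite (big_pred1 [tuple]) // => t /=; rewrite [t]tuple0; exact/esym/eqP.
Qed.

Section W.
Variable m : nat.
Definition neqr : rel 'I_m := fun a b => a != b.

Definition W k (x y : 'I_m) :=
  \sum_(s : k.-tuple 'I_m) (path neqr x s && (last x s == y) : nat).

Fixpoint ab (k : nat) : nat * nat :=
  if k is k'.+1 then let (a, b) := ab k' in ((m - 1) * b, a + (m - 1) * b - b)
  else (1, 0).

Lemma sum_if (y : 'I_m) a b :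
  \sum_(z : 'I_m) (if z == y then a else b) = a + (m - 1) * b.
Proof.
rewrite (bigD1 y) //= eqxx; congr (_ + _).
rewrite (eq_bigr (fun _ => b)); last by move=> z /negbTE ->.
by rewrite sum_nat_const cardC1 card_ord subn1 mulnC.
Qed.

Lemma sum_neq (x : 'I_m) (h : 'I_m -> nat) :
  \sum_(z : 'I_m) ((x != z) * h z) = \sum_z h z - h x.
Proof.
rewrite [X in _ = X - _](bigD1 x) //= addKn [RHS]big_mkcond /=.
apply: eq_bigr => z _; rewrite eq_sym; by case: (z != x); rewrite ?mul1n ?mul0n.
Qed.

Lemma W_eq k x y : W k x y = if x == y then (ab k).1 else (ab k).2.
Proof.
elim: k x y => [|k IH] x y.
  by rewrite /W sum_tuple0 /=; case: (x == y).
rewrite /W sum_tuple_cons /=.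
have -> : \sum_(z : 'I_m) \sum_(s : k.-tuple 'I_m)
     ((neqr x z && path neqr z s) && (last z s == y) : nat) =
     \sum_(z : 'I_m) ((x != z) * W k z y).
  apply: eq_bigr => z _; rewrite /W big_distrr /=; apply: eq_bigr => s _.
  by rewrite /neqr; case: (x != z); rewrite ?mul1n ?mul0n.
rewrite sum_neq (eq_bigr (fun z => if z == y then (ab k).1 else (ab k).2)); last first.
  by move=> z _; rewrite IH.
rewrite sum_if IH; case: (ab k) => a b /=.
by case: (x == y) => /=; rewrite ?addKn.
Qed.

Lemma ab_parity k : 2 <= m ->
  if odd k then (ab k).2 = (ab k).1 + 1 else (ab k).1 = (ab k).2 + 1.
Proof.
move=> hm; elim: k => [|k IH] //=.
case: (ab k) IH => a b /=; case: (odd k) => /= IH.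
  rewrite IH; nia.
rewrite IH; nia.
Qed.

Lemma abS k : ab k.+1 = ((m - 1) * (ab k).2, (ab k).1 + (m - 1) * (ab k).2 - (ab k).2).
Proof. by rewrite /=; case: (ab k). Qed.

Lemma ab_pos k : 3 <= m -> 0 < k -> 0 < (ab k).2.
Proof.
move=> hm; elim: k => [|k IH] // _.
case: k IH => [|k] IH; first by rewrite abS.
move: (IH isT); rewrite [ab k.+2]abS; move: (ab k.+1) => [a b] /= hb.
have h : 2 * b <= (m - 1) * b by rewrite leq_mul2r; apply/orP; right; lia.
move: h; set c := (m - 1) * b => h.
lia.
Qed.
End W.

Section Cyc.
Variable m : nat.

Definition cycT (sg : 'I_m -> 'I_m) (c : seq 'I_m) : bool :=
  if c is x :: s then path (@neqr m) x s && (last x s != sg x) else true.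

Lemma sum_last k (x c : 'I_m) :
  \sum_(s : k.-tuple 'I_m) (path (@neqr m) x s && (last x s != c) : nat) =
  \sum_(y : 'I_m) ((c != y) * W k x y).
Proof.
rewrite /W (eq_bigr (fun y => \sum_(s : k.-tuple 'I_m)
   ((c != y) * (path (@neqr m) x s && (last x s == y))))); last first.
  by move=> y _; rewrite big_distrr.
rewrite exchange_big /=; apply: eq_bigr => s _.
rewrite (bigD1 (last x s)) //= eqxx andbT big1 ?addn0.
  by rewrite eq_sym mulnb andbC.
by move=> y hy; rewrite [last x s == y]eq_sym (negbTE hy) andbF muln0.
Qed.

Lemma count_x k (x c : 'I_m) :
  \sum_(s : k.-tuple 'I_m) (path (@neqr m) x s && (last x s != c) : nat) =
  (ab m k).1 + (m - 1) * (ab m k).2 - (if x == c then (ab m k).1 else (ab m k).2).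
Proof.
rewrite sum_last sum_neq (eq_bigr (fun y => if y == x then (ab m k).1 else (ab m k).2)).
  by rewrite sum_if W_eq.
by move=> y _; rewrite W_eq eq_sym.
Qed.

Lemma cyc_sum k sg :
  \sum_(u : k.+1.-tuple 'I_m) (cycT sg u : nat) =
  \sum_(x : 'I_m) ((ab m k).1 + (m - 1) * (ab m k).2 -
                    (if x == sg x then (ab m k).1 else (ab m k).2)).
Proof.
rewrite sum_tuple_cons; apply: eq_bigr => x _; exact: count_x.
Qed.

Lemma ordS_neq (x : 'I_m) : 2 <= m -> ordS x != x.
Proof.
move=> hm; apply/eqP => /(congr1 val) /=.
have hx := ltn_ord x.
case: (ltngtP x.+1 m) => h.
- by rewrite modn_small //; lia.
- lia.
- by rewrite h modnn; lia.
Qed.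

Lemma cyc_proper_pos k : 3 <= m -> 0 < k ->
  0 < \sum_(u : k.+1.-tuple 'I_m) (cycT id u : nat).
Proof.
move=> hm hk; rewrite cyc_sum.
have x0 : 'I_m by exists 0; lia.
rewrite (bigD1 x0) //= eqxx.
have := ab_pos hm hk.
move: (ab m k) => [a b] /= hb.
have h : b <= (m - 1) * b by rewrite leq_pmull //; lia.
move: h; set c := (m - 1) * b => h.
lia.
Qed.

Lemma cyc_twist_lt k : 2 <= m -> odd k ->
  \sum_(u : k.+1.-tuple 'I_m) (cycT (@ordS m) u : nat) <
  \sum_(u : k.+1.-tuple 'I_m) (cycT id u : nat).
Proof.
move=> hm hk; rewrite !cyc_sum.
have x0 : 'I_m by exists 0; lia.
have := ab_parity k hm; rewrite hk.
rewrite [X in _ < X](bigD1 x0) // [X in X < _](bigD1 x0) //= eqxx.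
rewrite [x0 == _]eq_sym (negbTE (ordS_neq x0 hm)) [X in _ < _ + X](eq_bigr (fun _ => (m - 1) * (ab m k).2)); last first.
  by move=> x _; rewrite eqxx addKn.
rewrite [X in _ + X < _](eq_bigr (fun _ => (ab m k).1 + (m - 1) * (ab m k).2 - (ab m k).2)); last first.
  by move=> x _; rewrite eq_sym (negbTE (ordS_neq x hm)).
rewrite !sum_nat_const.
move: (ab m k) => [a b] /= ->.
move: (#|_|) => N.
have h : a + 1 <= (m - 1) * (a + 1) by rewrite leq_pmull //; lia.
move: h; set c := (m - 1) * (a + 1) => h.
rewrite -/c.
have : N * (a + c - (a + 1)) <= N * c by rewrite leq_mul2l; apply/orP; right; lia.
lia.
Qed.
End Cyc.

Section Tr.
Variables (g m : nat) (x0 : 'I_m).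
Hypothesis hg : 3 <= g.
Definition nn := g + (g + g).

Definition adj (a b : nat) : bool :=
  [|| (b == a.+1) && (b != g), (a == g.-1) && (b == 0) | (a == nn.-1) && (b == g)].

Definition chk (sg : 'I_m -> 'I_m) (c : seq 'I_m) (a b : nat) : bool :=
  if (a == nn.-1) && (b == g) then nth x0 c a != sg (nth x0 c b)
  else nth x0 c b != nth x0 c a.

Lemma cycT_nth sg x s :
  cycT sg (x :: s) =
  [forall i : 'I_(size s), nth x0 (x :: s) i.+1 != nth x0 (x :: s) i] &&
  (last x s != sg x).
Proof.
rewrite /cycT; congr andb; apply/(pathP x0)/forallP => h i.
  by have := h i (ltn_ord i); rewrite /neqr eq_sym.
by move=> hi; have := h (Ordinal hi); rewrite /neqr eq_sym.
Qed.

Lemma translate sg x s y s' :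
  size s = g.-1 -> size s' = (g + g).-1 ->
  (forall a b, a < nn -> b < nn -> adj a b -> chk sg ((x :: s) ++ (y :: s')) a b)
  <-> cycT id (x :: s) && cycT sg (y :: s').
Proof.
move=> hs hs'.
set c := (x :: s) ++ (y :: s').
have n1 i : i < g -> nth x0 c i = nth x0 (x :: s) i.
  by move=> hi; rewrite /c nth_cat /= hs ifT //; lia.
have n2 i : nth x0 c (g + i) = nth x0 (y :: s') i.
  by rewrite /c nth_cat /= hs ifF; [congr nth; lia | lia].
rewrite !cycT_nth; split.
- move=> H; apply/andP; split; apply/andP; split.
  + apply/forallP => [[i hi]] /=; rewrite hs in hi.
    have h : chk sg c i i.+1.
      apply: H; rewrite /nn /adj ?eqxx; try lia.
    move: h; rewrite /chk.
    have -> : (i == nn.-1) = false by apply/eqP; rewrite /nn; lia.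
    rewrite (n1 i) ?(n1 i.+1); try lia; by move=> /= ->.
  + have h : chk sg c g.-1 0.
      apply: H; rewrite /nn /adj ?eqxx; try lia.
    move: h; rewrite /chk.
    have -> : (g.-1 == nn.-1) = false by apply/eqP; rewrite /nn; lia.
    rewrite /= !n1; try lia.
    by rewrite (last_nth x0) -hs eq_sym.
  + apply/forallP => [[i hi]] /=; rewrite hs' in hi.
    have h : chk sg c (g + i) (g + i).+1.
      apply: H; rewrite /nn /adj ?eqxx; try lia.
    move: h; rewrite /chk.
    have -> : (g + i == nn.-1) = false by apply/eqP; rewrite /nn; lia.
    have -> : (g + i).+1 = g + i.+1 by lia.
    by rewrite /= !n2.
  + have h : chk sg c nn.-1 g.
      apply: H; rewrite /nn /adj ?eqxx; try lia.
    move: h; rewrite /chk !eqxx /=.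
    have -> : nn.-1 = g + (g + g).-1 by rewrite /nn; lia.
    have e0 := n2 0; rewrite addn0 in e0.
    by rewrite e0 n2 /= (last_nth x0) hs'.
- case/andP => /andP [/forallP h1 l1] /andP [/forallP h2 l2] a b ha hb.
  rewrite /adj /chk.
  case/or3P => [/andP [/eqP eb bg] | /andP [/eqP ea /eqP eb] | /andP [/eqP ea /eqP eb]].
  + have -> : (a == nn.-1) && (b == g) = false by rewrite (negbTE bg) andbF.
    subst b.
    case: (ltnP a.+1 g) => hag.
      rewrite !n1; try lia.
      have hi : a < size s by rewrite hs; lia.
      exact: (h1 (Ordinal hi)).
    have hag' : g <= a by move: bg => /eqP; lia.
    have -> : a = g + (a - g) by lia.
    rewrite -addnS !n2.
    have hi : a - g < size s' by rewrite hs'; move: hb; rewrite /nn; lia.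
    exact: (h2 (Ordinal hi)).
  + subst a b.
    have -> : (g.-1 == nn.-1) = false by apply/eqP; rewrite /nn; lia.
    rewrite /= !n1; try lia.
    by rewrite /= -hs -last_nth eq_sym.
  + subst a b; rewrite !eqxx /=.
    have -> : nn.-1 = g + (g + g).-1 by rewrite /nn; lia.
    have e0 := n2 0; rewrite addn0 in e0.
    rewrite e0 n2 /=; by rewrite (last_nth x0) hs' in l2.
Qed.
End Tr.

Section G.
Variable g : nat.
Hypothesis hg : 3 <= g.

Definition eG : rel 'I_(nn g) := fun a b => adj g a b || adj g b a.

Lemma adj_irr a : adj g a a = false.
Proof. rewrite /adj /nn; apply/negbTE; apply/negP; case/or3P; lia. Qed.

Lemma adj_bad : adj g g (nn g).-1 = false.
Proof. rewrite /adj /nn; apply/negbTE; apply/negP; case/or3P; lia. Qed.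

Lemma eG_simple : simple_graph eG.
Proof.
split => [u v|u]; first by rewrite /eG orbC.
by rewrite /eG adj_irr.
Qed.

End G.

Section Cov.
Variables (g m : nat).
Hypothesis hg : 3 <= g.
Notation V := 'I_(nn g).

Definition tau (a b : V) (z : 'I_m) : 'I_m :=
  if (a == g :> nat) && (b == (nn g).-1 :> nat) then ordS z
  else if (a == (nn g).-1 :> nat) && (b == g :> nat) then ord_pred z else z.

Lemma tau_sym (u v : V) (a b : 'I_m) : (b == tau u v a) = (a == tau v u b).
Proof.
rewrite /tau.
have hgn : g != (nn g).-1 by rewrite /nn; apply/eqP; lia.
case: (boolP ((u == g :> nat) && (v == (nn g).-1 :> nat))) => [/andP [/eqP hu /eqP hv]|h1].
  rewrite hu hv eqxx [(nn g).-1 == g]eq_sym (negbTE hgn) /=.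
  by apply/eqP/eqP => [->|->]; rewrite eqxx ?ordSK ?ord_predK.
case: (boolP ((u == (nn g).-1 :> nat) && (v == g :> nat))) => [/andP [/eqP hu /eqP hv]|h2].
  rewrite hu hv eqxx (negbTE hgn) /=.
  by rewrite eqxx; apply/eqP/eqP => [->|->]; rewrite ?ordSK ?ord_predK.
rewrite andbC (negbTE h2) andbC (negbTE h1).
by rewrite eq_sym.
Qed.

Definition Hc : cover_rel V m :=
  [ffun p => ((p.1.1 == p.2.1) && (p.1.2 != p.2.2)) ||
             (eG p.1.1 p.2.1 && (p.2.2 == tau p.1.1 p.2.1 p.1.2))].

Lemma Hc_cover : is_cover (@eG g) Hc.
Proof.
have [esym eirr] := eG_simple hg.
apply/and5P; split.
- apply/forallP => x; apply/forallP => y; rewrite !ffunE /=.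
  by rewrite [y.1 == _]eq_sym [y.2 == x.2]eq_sym esym [y.2 == tau _ _ _]tau_sym.
- apply/forallP => x; by rewrite ffunE /= !eqxx /= (negbTE (eirr _)).
- apply/forallP => x; apply/forallP => y; apply/implyP => /andP [h1 h2].
  rewrite ffunE /= h1 /=; apply/orP; left.
  move: h1 h2; case: x => [x1 x2]; case: y => [y1 y2] /= /eqP ->.
  by apply: contra => /eqP ->.
- apply/forallP => x; apply/forallP => y; apply/implyP => /andP [].
  rewrite ffunE /= => /orP [/andP [h _]|/andP [h _]] hn; first by rewrite h in hn.
  exact: h.
- apply/forallP => [[x1 x2]]; apply/forallP => [[y1 y2]]; apply/forallP => [[z1 z2]] /=.
  apply/implyP; case/and4P => exy /eqP eyz; subst z1; rewrite !ffunE /=.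
  have hne : (x1 == y1) = false.
    by apply/negbTE; apply: contraTneq exy => ->; rewrite eirr.
  by rewrite hne /= exy /= => /eqP -> /eqP ->.
Qed.

Definition twistedP (f : {ffun V -> 'I_m}) : bool :=
  [forall a, forall b, eG a b ==> (f b != tau a b (f a))].

Lemma dp_le (x0 : 'I_m) : dp_count Hc <= #|[set f | twistedP f]|.
Proof.
set S := [set I : {set V * 'I_m} | (#|I| == #|V|) && [forall x in I, forall y in I, ~~ Hc (x, y)]].
pose phi (I : {set V * 'I_m}) := [ffun u => odflt x0 [pick b | (u, b) \in I]].
have graphE I : I \in S -> I = [set (u, phi I u) | u : V].
  rewrite inE => /andP [/eqP hc /forallP hind].
  apply/eqP; rewrite eqEcard; apply/andP; split.
    apply/subsetP => [[u a] hua]; apply/imsetP; exists u => //.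
    rewrite ffunE; case: pickP => [b hb|]; last by move=> /(_ a); rewrite hua.
    congr pair => /=; apply/eqP; apply: contraT => hab.
    have := hind (u, a); rewrite hua /= => /forallP /(_ (u, b)); rewrite hb /=.
    by rewrite ffunE /= eqxx hab.
  rewrite hc card_imset //; by move=> u v [].
have phiS I : I \in S -> phi I \in [set f | twistedP f].
  move=> hI; have hI' := hI; rewrite inE in hI' => /=; case/andP: hI' => _ /forallP hind.
  rewrite inE; apply/forallP => a; apply/forallP => b; apply/implyP => hab.
  have ha : (a, phi I a) \in I by rewrite [in X in _ \in X](graphE _ hI); apply/imsetP; exists a.
  have hb : (b, phi I b) \in I by rewrite [in X in _ \in X](graphE _ hI); apply/imsetP; exists b.
  have := hind (a, phi I a); rewrite ha /= => /forallP /(_ (b, phi I b)); rewrite hb /=.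
  by rewrite ffunE /= hab /= negb_or => /andP [_].
rewrite /dp_count -/S -(card_in_imset (f := phi)).
  apply: subset_leq_card; apply/subsetP => f /imsetP [I hI ->]; exact: phiS.
move=> I J hI hJ hIJ; by rewrite (graphE _ hI) (graphE _ hJ) hIJ.
Qed.

Lemma dp_chrom_le (x0 : 'I_m) :
  dp_chrom m (eG_simple hg) <= #|[set f | twistedP f]|.
Proof.
apply: leq_trans (dp_le x0).
rewrite /dp_chrom; case: ex_minnP => n0 _; apply.
by apply/existsP; exists Hc; rewrite Hc_cover eqxx.
Qed.
End Cov.

Section Cnt.
Variables (g m : nat) (x0 : 'I_m).
Hypothesis hg : 3 <= g.
Notation V := 'I_(nn g).

Lemma forall_e (R : V -> V -> bool) (Q : nat -> nat -> bool) :
  (forall a b : V, adj g a b -> R a b = Q a b) ->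
  (forall a b : V, adj g b a -> R a b = Q b a) ->
  [forall a, forall b, eG a b ==> R a b] <->
  (forall a b, a < nn g -> b < nn g -> adj g a b -> Q a b).
Proof.
move=> h1 h2; split.
  move=> /forallP H a b ha hb hab.
  have := H (Ordinal ha); move=> /forallP /(_ (Ordinal hb)).
  by rewrite /eG /= hab /= h1.
move=> H; apply/forallP => a; apply/forallP => b; apply/implyP.
by case/orP => h; [rewrite h1 // | rewrite h2 //]; apply: H.
Qed.

Lemma pair_chrom x s y s' :
  size s = g.-1 -> size s' = (g + g).-1 ->
  let f : {ffun V -> 'I_m} := [ffun i : V => nth x0 ((x :: s) ++ (y :: s')) (i : nat)] in
  [forall a, forall b, eG a b ==> (f a != f b)] =
  cycT id (x :: s) && cycT id (y :: s').
Proof.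
move=> hs hs' f.
apply/idP/idP.
- move/(forall_e (Q := chk g x0 id ((x :: s) ++ (y :: s')))) => H.
  apply/(translate x0 hg _ x y hs hs'); apply: H.
  + move=> a b _; rewrite /chk !ffunE; case: ifP => // _; by rewrite eq_sym.
  + move=> a b _; rewrite /chk !ffunE; case: ifP => // _; by rewrite eq_sym.
- move/(translate x0 hg _ x y hs hs') => H.
  apply/(forall_e (Q := chk g x0 id ((x :: s) ++ (y :: s')))) => //.
  + move=> a b _; rewrite /chk !ffunE; case: ifP => // _; by rewrite eq_sym.
  + move=> a b _; rewrite /chk !ffunE; case: ifP => // _; by rewrite eq_sym.
Qed.

Lemma pair_twist x s y s' :
  size s = g.-1 -> size s' = (g + g).-1 ->
  let f : {ffun V -> 'I_m} := [ffun i : V => nth x0 ((x :: s) ++ (y :: s')) (i : nat)] in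
  twistedP f = cycT id (x :: s) && cycT (@ordS m) (y :: s').
Proof.
move=> hs hs' f.
have hgn : g != (nn g).-1 by rewrite /nn; apply/eqP; lia.
have E1 : forall a b : V, adj g a b -> f b != tau a b (f a) =
            chk g x0 (@ordS m) ((x :: s) ++ (y :: s')) a b.
  move=> a b hab; rewrite /tau /chk !ffunE.
  case: (boolP ((a == g :> nat) && (b == (nn g).-1 :> nat))) => [/andP [/eqP ea /eqP eb]|h1].
    by move: hab; rewrite ea eb adj_bad.
  case: ifP => // /andP [_ _].
  apply/negb_inj; rewrite !negbK; apply/eqP/eqP => [->|->]; by rewrite ?ordSK ?ord_predK.
have E2 : forall a b : V, adj g b a -> f b != tau a b (f a) =
            chk g x0 (@ordS m) ((x :: s) ++ (y :: s')) b a.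
  move=> a b hab; rewrite /tau /chk !ffunE.
  case: (boolP ((a == g :> nat) && (b == (nn g).-1 :> nat))) => [/andP [/eqP ea /eqP eb]|h1].
    by rewrite ea eb !eqxx.
  case: (boolP ((a == (nn g).-1 :> nat) && (b == g :> nat))) => [/andP [/eqP ea /eqP eb]|h2].
    by move: hab; rewrite ea eb adj_bad.
  rewrite andbC (negbTE h1); by rewrite eq_sym.
rewrite /twistedP.
apply/idP/idP.
- move/(forall_e E1 E2) => H.
  by apply/(translate x0 hg _ x y hs hs'); apply: H.
- move/(translate x0 hg _ x y hs hs') => H.
  by apply/(forall_e E1 E2).
Qed.
End Cnt.

Section Tot.
Variables (k m : nat) (x0 : 'I_m).
Hypothesis hg : 3 <= k.+1.

Lemma sum_split (P : {ffun 'I_(nn k.+1) -> 'I_m} -> bool) (A B : seq 'I_m -> bool) :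
  (forall x (s : k.-tuple 'I_m) y (s' : (k + k.+1).-tuple 'I_m),
     P [ffun i : 'I_(nn k.+1) => nth x0 ((x :: s) ++ (y :: s')) (i : nat)] =
     A (x :: s) && B (y :: s')) ->
  #|[set f | P f]| =
  (\sum_(u : k.+1.-tuple 'I_m) (A u : nat)) *
  (\sum_(v : (k + k.+1).+1.-tuple 'I_m) (B v : nat)).
Proof.
move=> hP.
rewrite card_set_sum sum_ffun_tuple.
rewrite (@sum_tuple_cat k.+1 (k + k.+1).+1).
rewrite big_distrl /=; apply: eq_bigr => u _.
rewrite big_distrr /=; apply: eq_bigr => v _.
case/tupleP: u => x s; case/tupleP: v => y s'.
rewrite mulnb -hP; congr (nat_of_bool (P _)).
apply/ffunP => i; by rewrite !ffunE (tnth_nth x0).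
Qed.

Lemma chrom_count :
  chrom (@eG k.+1) m =
  (\sum_(u : k.+1.-tuple 'I_m) (cycT id u : nat)) *
  (\sum_(v : (k + k.+1).+1.-tuple 'I_m) (cycT id v : nat)).
Proof.
rewrite /chrom; apply: sum_split => x s y s'.
apply: pair_chrom => //; rewrite size_tuple //; lia.
Qed.

Lemma twist_count :
  #|[set f | @twistedP k.+1 m f]| =
  (\sum_(u : k.+1.-tuple 'I_m) (cycT id u : nat)) *
  (\sum_(v : (k + k.+1).+1.-tuple 'I_m) (cycT (@ordS m) v : nat)).
Proof.
apply: sum_split => x s y s'.
apply: pair_twist => //; rewrite size_tuple //; lia.
Qed.
End Tot.

Section Girth.
Variable g : nat.
Hypothesis hg : 3 <= g.
Notation V := 'I_(nn g).

Definition succv (a : nat) : nat :=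
  if a.+1 == g then 0 else if a.+1 == nn g then g else a.+1.

Lemma succv_lt (a : V) : succv a < nn g.
Proof.
have := ltn_ord a; rewrite /succv /nn.
move=> ha; repeat case: ifP => ?; lia.
Qed.

Definition succ (a : V) : V := Ordinal (succv_lt a).

Lemma small_mod a d : a < d + d -> a %% d = if a < d then a else a - d.
Proof.
move=> h; case: ltnP => h2; first by rewrite modn_small.
have -> : a = d + (a - d) by lia.
by rewrite modnDl modn_small; lia.
Qed.

Lemma succv1 a : a < g -> succv a = a.+1 %% g.
Proof.
move=> h; rewrite small_mod; last lia.
rewrite /succv /nn; repeat case: ifP => ?; repeat case: ltnP => ?; lia.
Qed.

Lemma succv2 a : g <= a < nn g -> succv a = g + (a - g).+1 %% (g + g).
Proof.
move=> h; rewrite small_mod; last (move: h; rewrite /nn; lia).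
move: h; rewrite /succv /nn => h; repeat case: ifP => ?; repeat case: ltnP => ?; lia.
Qed.

Lemma eG_succ (a : V) : eG a (succ a).
Proof.
have := ltn_ord a; rewrite /eG /= /adj /succv /nn.
move=> ha; apply/orP; left; repeat case: ifP => ?; lia.
Qed.

Lemma eG_inv (a b : V) : eG a b -> b = succ a \/ a = succ b.
Proof.
have := ltn_ord a; have := ltn_ord b.
rewrite /eG /adj /nn => hb ha.
case/orP => H; [left | right]; apply: val_inj; rewrite /= /succv /nn;
  move: H; repeat case: ifP => ?; lia.
Qed.

Lemma succ_inj : injective succ.
Proof.
move=> a b /(congr1 val) /=; have := ltn_ord a; have := ltn_ord b.
rewrite /succv /nn => hb ha.
move=> H; apply: val_inj => /=; move: H.
repeat case: ifP => ?; lia.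
Qed.

Lemma iter_succ (w : V) j :
  (iter j succ w : nat) = if w < g then (w + j) %% g else g + (w - g + j) %% (g + g).
Proof.
elim: j => [|j IH].
  rewrite /= addn0; case: ifP => h; first by rewrite modn_small.
  have hw : (w : nat) < g + (g + g) := ltn_ord w.
  by rewrite modn_small; lia.
rewrite iterS /= IH.
case: ifP => h.
  rewrite succv1; last by rewrite ltn_mod; lia.
  by rewrite -addn1 modnDml addn1 addnS.
rewrite succv2; last first.
  have := ltn_mod (w - g + j) (g + g); rewrite /nn; lia.
rewrite addKn -addn1 modnDml addn1 addnS //.
Qed.

Lemma mod_inj a i j d : i < d -> j < d -> (a + i) %% d = (a + j) %% d -> i = j.
Proof.
move=> hi hj /eqP; rewrite eqn_modDl !modn_small //; by move/eqP.
Qed.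

Lemma iter_inj (w : V) i j : i < g -> j < g -> iter i succ w = iter j succ w -> i = j.
Proof.
move=> hi hj /(congr1 (@nat_of_ord _)); rewrite !iter_succ.
case: ifP => _; first exact: mod_inj.
move/eqP; rewrite eqn_add2l => /eqP; apply: mod_inj; lia.
Qed.

Lemma ordS_pred_neq k (i : 'I_k) : 3 <= k -> ordS i != ord_pred i.
Proof.
move=> hk; apply/negP => /eqP h.
have : ordS (ordS i) = i by rewrite h ord_predK.
move/(congr1 val) => /=.
have hi := ltn_ord i.
rewrite (small_mod (a := i.+1)); last lia.
case: ltnP => h1.
  rewrite small_mod; last lia.
  case: ltnP => h2; lia.
have -> : (i.+1 - k).+1 = 1 by lia.
rewrite modn_small; lia.
Qed.

Lemma no_short k : 3 <= k -> k < g -> ~ has_cycle (@eG g) k.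
Proof.
move=> hk hkg [_ [c [cinj hc]]].
set S := [set c i | i : 'I_k].
have cardS : #|S| = k by rewrite card_imset // card_ord.
have closed w : w \in S -> succ w \in S.
  case/imsetP => i _ ->.
  have e1 := hc i.
  have e2 := hc (ord_pred i); rewrite ord_predK in e2.
  have [esy _] := eG_simple hg.
  rewrite esy in e2.
  have hpq : c (ordS i) != c (ord_pred i).
    by rewrite (inj_eq cinj); apply: ordS_pred_neq.
  case: (eG_inv e1) => [<-|h1]; first by apply/imsetP; exists (ordS i).
  case: (eG_inv e2) => [<-|h2]; first by apply/imsetP; exists (ord_pred i).
  by move/succ_inj: (etrans (esym h1) h2) => heq; move: hpq; rewrite heq eqxx.
have k0 : 0 < k by lia.
set w := c (Ordinal k0).
have inS j : iter j succ w \in S.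
  elim: j => [|j IH]; first by apply/imsetP; exists (Ordinal k0).
  rewrite iterS; exact: closed.
have : #|[set iter (val j) succ w | j : 'I_g]| <= #|S|.
  apply: subset_leq_card; apply/subsetP => x /imsetP [j _ ->]; exact: inS.
rewrite card_imset ?card_ord ?cardS; first lia.
move=> i j /iter_inj h; apply: val_inj; apply: h; exact: ltn_ord.
Qed.

Lemma has_g : has_cycle (@eG g) g.
Proof.
split => //.
have hgn : g <= nn g by rewrite /nn leq_addr.
exists (fun i : 'I_g => widen_ord hgn i); split.
  by move=> i j /(congr1 val) /= h; apply: val_inj.
move=> i; rewrite /eG /adj /=; apply/orP; left.
have hi := ltn_ord i.
rewrite (small_mod (a := i.+1)); last lia.
case: ltnP => h; lia.
Qed.

Lemma girthG : girth_eq (@eG g) g.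
Proof.
split; first exact: has_g.
move=> k hk [h3 hc]; exact: (no_short h3 hk).
Qed.
End Girth.

Theorem mainTheorem2 (g : nat) : 3 <= g ->
  exists (n : nat) (e : rel 'I_n) (He : simple_graph e),
    girth_eq e g /\
    exists N : nat, forall m : nat, N <= m -> dp_chrom m He < chrom e m.
Proof.
case: g => [|k] hg; first by [].
exists (nn k.+1), (@eG k.+1), (eG_simple hg); split; first exact: girthG.
exists 3 => m hm.
have x0 : 'I_m by exists 0; lia.
apply: leq_ltn_trans (dp_chrom_le hg x0) _.
rewrite (twist_count x0 hg) (chrom_count x0 hg).
rewrite ltn_pmul2l; last by apply: cyc_proper_pos; lia.
apply: cyc_twist_lt; first lia.
by rewrite oddD /= addbN addbb.
Qed.
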